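(* Let $H\subset\mathrm{Aut}(K^n)$ be the subgroup generated by $\mathcal{S}_n$ and $\{\sigma_{ij}\}_{1\le i<j\le n}$. For $1\le i<j\le n$ and $t\in H$, if $t$ has a fixed point on $\Delta_{K*\mu,ij}$, then $t=(i,j)$ (the transposition) or $t=\mathrm{id}_{K^n}$.
   Context: $n\ge2$. $\mu:K\to E$ is the universal covering of an Enriques surface $E$ by a K3 surface, $\sigma$ its (fixed-point-free) covering involution. $\mathcal{S}_n$ acts on $K^n$ by permuting factors; $\sigma_{ij}$ applies $\sigma$ to coordinates $i$ and $j$. $E^n_*\subset E^n$ is the set of $n$-tuples with at most two coordinates equal (i.e. at most one pair of equal coordinates and no three equal). $K^n_{*\mu}=(\mu^n)^{-1}(E^n_* )$ where $\mu^n(x_1,\dots,x_n)=(\mu(x_1),\dots,\mu(x_n))$, and $\Delta_{K*\mu,ij}=\{(x_l)\in K^n_{*\mu}:x_i=x_j\}$. *)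

(* Defs.v *)
From HB Require Import structures.
From mathcomp Require Import all_boot all_order all_fingroup.
Set Implicit Arguments. Unset Strict Implicit. Unset Printing Implicit Defensive.

Definition fpf_involution (K : Type) (sigma : K -> K) : Prop :=
  (forall x, sigma (sigma x) = x) /\ (forall x, sigma x <> x).

Definition is_quotient_by (K E : Type) (sigma : K -> K) (mu : K -> E) : Prop :=
  (forall e, exists x, mu x = e) /\
  (forall x y, mu x = mu y <-> (y = x \/ y = sigma x)).

Definition perm_act (K : Type) (n : nat) (s : 'S_n) (x : 'I_n -> K) : 'I_n -> K :=
  fun l => x (s l).

Definition sigma_ij (K : Type) (n : nat) (sigma : K -> K) (i j : 'I_n)
  (x : 'I_n -> K) : 'I_n -> K :=
  fun l => if (l == i) || (l == j) then sigma (x l) else x l.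

(* All generators are involutions/of finite order, so the generated subgroup
   is the set of finite composites of generators (identity included). *)
Inductive inH (K : Type) (n : nat) (sigma : K -> K) :
  (('I_n -> K) -> ('I_n -> K)) -> Prop :=
| inH_id : inH sigma id
| inH_perm (s : 'S_n) t : inH sigma t -> inH sigma (perm_act s \o t)
| inH_sig (i j : 'I_n) t : (i < j)%N -> inH sigma t -> inH sigma (sigma_ij sigma i j \o t).

(* E^n_* : at most one pair of equal coordinates (hence no three equal). *)
Definition En_star (E : Type) (n : nat) (y : 'I_n -> E) : Prop :=
  forall a b c d : 'I_n, (a < b)%N -> (c < d)%N -> y a = y b -> y c = y d ->
    a = c /\ b = d.

Definition Kn_star_mu (K E : Type) (n : nat) (mu : K -> E) (x : 'I_n -> K) : Prop :=
  En_star (fun l => mu (x l)).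

Definition Delta_K_star_mu (K E : Type) (n : nat) (mu : K -> E) (i j : 'I_n)
  (x : 'I_n -> K) : Prop :=
  Kn_star_mu mu x /\ x i = x j.

(* Main.v *)
Require Import Defs.
From mathcomp Require Import all_boot all_order all_fingroup.
From Stdlib Require Import FunctionalExtensionality.
Set Implicit Arguments.

Definition sigb (K : Type) (sigma : K -> K) (b : bool) (v : K) := if b then sigma v else v.

Lemma nf (K : Type) (n : nat) (sigma : K -> K) (hs : forall x, sigma (sigma x) = x)
  (t : ('I_n -> K) -> ('I_n -> K)) : inH sigma t -> exists (s : 'S_n) (e : 'I_n -> bool),
   forall y, t y = fun l => sigb sigma (e l) (y (s l)).
Proof.
elim=> [|p t' _ [s [e He]]|i j t' _ _ [s [e He]]].
- exists 1%g, (fun _ => false) => y; apply: functional_extensionality => l.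
  by rewrite perm1.
- exists (p * s)%g, (fun l => e (p l)) => y; apply: functional_extensionality => l.
  by rewrite /= He /perm_act permM.
- exists s, (fun l => (e l) (+) ((l == i) || (l == j))) => y.
  apply: functional_extensionality => l.
  rewrite /= He /sigma_ij /sigb.
  by case: ((l == i) || (l == j)); case: (e l) => //=; rewrite hs.
Qed.

Theorem lemma2p3 (K E : Type) (sigma : K -> K) (mu : K -> E) (n : nat)
  (hn : (2 <= n)%N) (hsigma : fpf_involution sigma) (hmu : is_quotient_by sigma mu)
  (i j : 'I_n) (hij : (i < j)%N)
  (t : ('I_n -> K) -> ('I_n -> K)) (ht : inH sigma t)
  (hfix : exists x, Delta_K_star_mu mu i j x /\ t x = x) :
  t = perm_act (tperm i j) \/ t = id.
Proof.
case: hsigma => hs hfp; case: hmu => _ hmu.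
have [s [e He]] := nf hs ht.
case: hfix => x [[hst hxij] htx].
have hx : forall l, x l = sigb sigma (e l) (x (s l)).
  by move=> l; rewrite -{1}htx He.
have hmul : forall l, mu (x l) = mu (x (s l)).
  move=> l; symmetry; apply/hmu; rewrite (hx l) /sigb; case: (e l); [right|left] => //.
have hmuij : mu (x i) = mu (x j) by rewrite hxij.
have pairP : forall a b : 'I_n, a != b -> mu (x a) = mu (x b) ->
    (a == i) && (b == j) || (a == j) && (b == i).
  move=> a b hab hm.
  have [lt|gt|eq] := ltngtP a b.
  - by have [-> ->] := hst a b i j lt hij hm hmuij; rewrite !eqxx.
  - by have [-> ->] := hst b a i j gt hij (esym hm) hmuij; rewrite !eqxx orbT.
  - by move/ord_inj: eq => eq; rewrite eq eqxx in hab.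
have hij' : i != j by rewrite neq_ltn hij.
have sfix : forall l, l != i -> l != j -> s l = l.
  move=> l hi hj; apply/eqP; apply/negPn/negP => hne.
  have := pairP l (s l); rewrite eq_sym hne (negbTE hi) (negbTE hj) /=.
  by move=> /(_ isT (hmul l)).
have sij : forall l, l != j -> s l != j -> s l = l.
  move=> l hlj hsj; apply/eqP; apply/negPn/negP => hne.
  have := pairP l (s l); rewrite eq_sym hne (negbTE hlj) (negbTE hsj) /= andbF.
  by move=> /(_ isT (hmul l)).
have sji : forall l, l != i -> s l != i -> s l = l.
  move=> l hlj hsj; apply/eqP; apply/negPn/negP => hne.
  have := pairP l (s l); rewrite eq_sym hne (negbTE hlj) (negbTE hsj) /= andbF.
  by move=> /(_ isT (hmul l)).
have ef : forall l, x (s l) = x l -> e l = false.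
  move=> l h; move: (hx l); rewrite h /sigb; case: (e l) => // /esym /hfp [].
have hsi : s i = i \/ s i = j.
  case: (eqVneq (s i) j) => [->|h]; [by right|left; exact: (sij i hij' h)].
have hsj : s j = j \/ s j = i.
  case: (eqVneq (s j) i) => [->|h]; [by right|left; apply: (sji j _ h); by rewrite eq_sym].
have exi : x (s i) = x i by case: (hsi) => ->.
have exj : x (s j) = x j by case: (hsj) => ->; rewrite ?hxij.
have eall : forall l, e l = false.
  move=> l; apply: ef.
  case: (eqVneq l i) => [->//|hi]; case: (eqVneq l j) => [->//|hj].
  by rewrite (sfix l).
case: hsi => hsi.
- right; apply: functional_extensionality => y; rewrite He.
  apply: functional_extensionality => l; rewrite eall /sigb.
  case: (eqVneq l i) => [->|hi]; first by rewrite hsi.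
  case: (eqVneq l j) => [->|hj]; last by rewrite sfix.
  case: hsj => [->//|hsj]; have hh := perm_inj (etrans hsi (esym hsj)).
  by rewrite hh eqxx in hij'.
- left; apply: functional_extensionality => y; rewrite He.
  apply: functional_extensionality => l; rewrite eall /sigb /perm_act.
  case: (eqVneq l i) => [->|hi]; first by rewrite tpermL hsi.
  case: (eqVneq l j) => [->|hj]; last by rewrite tpermD 1?eq_sym // (sfix l).
  rewrite tpermR; case: hsj => [hsj|->//]; have hh := perm_inj (etrans hsi (esym hsj)).
  by rewrite hh eqxx in hij'.
Qed.
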